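(* Let $\mathbb{H}$ be a simple hypergraph of order $n$ with strong chromatic number $\chi'(\mathbb{H})=k'$. Then for all non-negative integers $h>k$, $$\lambda_{h,k}(\mathbb{H})\le k(n-k')+(k'-1)h.$$
   Context: A strong $t$-colouring of a hypergraph $\mathbb{H}=(V,E)$ is a partition $\{C_1,\dots,C_t\}$ of $V$ with $|C_i\cap e|\le 1$ for all $e\in E$ and all $i$; $\chi'(\mathbb{H})$ is the least such $t$. For non-negative integers $h>k$, an $L(h,k)$-colouring of $\mathbb{H}$ is a map $f:V\to\mathbb{Z}_{\ge 0}$ such that $|f(u)-f(v)|\ge h$ whenever $u\ne v$ lie in a common edge, and $|f(u)-f(v)|\ge k$ whenever there are edges $e_1\ni v$, $e_2\ni u$ with $(e_1\cap e_2)\setminus\{u,v\}\ne\emptyset$. The span is $\max f-\min f$; $\lambda_{h,k}(\mathbb{H})$ is the minimum span of an $L(h,k)$-colouring. A hypergraph is simple if no edge contains another and every edge has at least two vertices. *)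

(* Defs.v *)
From mathcomp Require Import all_boot.
From mathcomp Require Import boolp.
From mathcomp Require Import zify.

Set Implicit Arguments.
Unset Strict Implicit.
Unset Printing Implicit Defensive.

(* A hypergraph on a finite vertex type V is given by its edge set
   E : {set {set V}}.  Its order is #|V|. *)

Definition simple_hypergraph (V : finType) (E : {set {set V}}) : Prop :=
  (forall e1 e2, e1 \in E -> e2 \in E -> e1 != e2 -> ~~ (e1 \subset e2)) /\
  (forall e, e \in E -> 2 <= #|e|).

Definition strong_colouring (V : finType) (E : {set {set V}}) (t : nat)
    (c : V -> 'I_t) : Prop :=
  forall e, e \in E -> forall i : 'I_t, #|[set v in e | c v == i]| <= 1.

Definition strong_chromatic_number (V : finType) (E : {set {set V}}) (k' : nat) : Prop :=
  (exists c : V -> 'I_k', strong_colouring E c) /\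
  (forall t, t < k' -> ~ exists c : V -> 'I_t, strong_colouring E c).

Definition distn (a b : nat) : nat := (a - b) + (b - a).

Definition L_colouring (V : finType) (E : {set {set V}}) (h k : nat)
    (f : V -> nat) : Prop :=
  (forall u v, u != v -> (exists2 e, e \in E & (u \in e) && (v \in e)) ->
     h <= distn (f u) (f v)) /\
  (forall u v, u != v ->
     (exists e1 e2 w, [/\ e1 \in E, e2 \in E, v \in e1, u \in e2 &
        [/\ w \in e1, w \in e2, w != u & w != v]]) ->
     k <= distn (f u) (f v)).

Definition span (V : finType) (f : V -> nat) : nat :=
  \max_(v : V) f v - \big[minn/(\max_(v : V) f v)]_(v : V) f v.

Lemma L_colouring_exists (V : finType) (E : {set {set V}}) (h k : nat) :
  exists s, `[< exists f, L_colouring E h k f /\ span f = s >].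
Proof.
pose f := fun v : V => (h + k) * (enum_rank v : nat).
have Hd : forall u v, u != v -> h + k <= distn (f u) (f v).
  move=> u v huv; rewrite /distn /f.
  have : (enum_rank u : nat) != enum_rank v.
    by apply: contra huv => /eqP /val_inj /enum_rank_inj ->.
  move: (enum_rank u : nat) (enum_rank v : nat) => a b hab.
  have [hlt|hgt] : a < b \/ b < a by lia.
  - have -> : (h + k) * b - (h + k) * a = (h + k) * (b - a) by rewrite mulnBr.
    by apply: leq_trans (leq_addl _ _); rewrite leq_pmulr //; lia.
  - have -> : (h + k) * a - (h + k) * b = (h + k) * (a - b) by rewrite mulnBr.
    by apply: leq_trans (leq_addr _ _); rewrite leq_pmulr //; lia.
exists (span f); apply/asboolP; exists f; split => //; split.
- by move=> u v huv _; apply: leq_trans (Hd u v huv); apply: leq_addr.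
- by move=> u v huv _; apply: leq_trans (Hd u v huv); apply: leq_addl.
Qed.

Definition lambda_hk (V : finType) (E : {set {set V}}) (h k : nat) : nat :=
  ex_minn (L_colouring_exists E h k).

(* Main.v *)
Require Import Defs.
From mathcomp Require Import all_boot.
From mathcomp Require Import boolp zify.

Lemma distn_ge a b d : a + d <= b -> d <= distn a b.
Proof. rewrite /distn; lia. Qed.

Lemma distn_sym a b : distn a b = distn b a.
Proof. rewrite /distn; lia. Qed.

Theorem theorem3p1 (V : finType) (E : {set {set V}}) (n k' : nat) :
  0 < #|V| -> #|V| = n ->
  simple_hypergraph E ->
  strong_chromatic_number E k' ->
  forall h k : nat, k < h ->
  lambda_hk E h k <= k * (n - k') + (k' - 1) * h.
Proof.
move=> Vpos Hn _ [[c Hc] Hmin] h k hk.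
have nk : k' <= n.
  rewrite leqNgt; apply/negP => nlt; apply: (Hmin n nlt).
  exists (fun v => cast_ord Hn (enum_rank v)) => e _ i.
  apply: leq_trans (_ : #|[set enum_val (cast_ord (esym Hn) i)]| <= 1);
    last by rewrite cards1.
  apply: subset_leq_card; apply/subsetP => v; rewrite !inE => /andP [_ /eqP <-].
  apply/eqP; rewrite -[v in LHS]enum_rankK; congr enum_val; apply: val_inj => //.
pose cn v := nat_of_ord (c v).
pose lt u v := (cn u < cn v) || ((cn u == cn v) && (enum_rank u < enum_rank v)).
have lt_irr : forall v, ~~ lt v v by move=> v; rewrite /lt ltnn eqxx ltnn.
have lt_trans : forall u v w, lt u v -> lt v w -> lt u w.
  move=> u v w; rewrite /lt.
  move: (cn u) (cn v) (cn w) (nat_of_ord (enum_rank u)) (nat_of_ord (enum_rank v))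
    (nat_of_ord (enum_rank w)) => a b d x y z.
  case: (ltngtP a b) => //= ab; case: (ltngtP b d) => //= bd; lia.
have lt_tot : forall u v, u != v -> lt u v || lt v u.
  move=> u v uv; rewrite /lt.
  have : (enum_rank u : nat) != enum_rank v.
    by apply: contra uv => /eqP /val_inj /enum_rank_inj ->.
  move: (cn u) (cn v) (nat_of_ord (enum_rank u)) (nat_of_ord (enum_rank v)) => a b x y.
  case: (ltngtP a b) => //=; case: (ltngtP x y) => //=.
pose pos v := #|[set u | lt u v]|.
have pos_lt : forall u v, lt u v -> pos u < pos v.
  move=> u v uv; apply: proper_card; apply/properP; split.
    by apply/subsetP => w; rewrite !inE => wu; apply: lt_trans wu uv.
  by exists u; rewrite !inE // (negbTE (lt_irr u)).
have pos_n : forall v, pos v < n.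
  move=> v; rewrite -Hn; apply: proper_card; apply/properP; split.
    exact: subset_predT.
  by exists v; rewrite !inE // (negbTE (lt_irr v)).
have cn_k : forall v, cn v <= k' - 1 by move=> v; rewrite /cn; have := ltn_ord (c v); lia.
pose f v := k * pos v + (h - k) * cn v.
have key : forall u v, lt u v -> if cn u == cn v then k <= distn (f u) (f v)
                                  else h <= distn (f u) (f v).
  move=> u v uv; have pl := pos_lt u v uv.
  have : cn u <= cn v by move: uv; rewrite /lt; case: ltngtP.
  rewrite /f; case: eqP => [-> _|ne le]; apply: distn_ge; first by nia.
  have : cn u < cn v by lia.
  move: (pos u) (pos v) (cn u) (cn v) pl => a b x y ab xy; nia.
have Lc : L_colouring E h k f.
  split.
  - move=> u v uv [e eE /andP [ue ve]].
    have cneq : cn u != cn v.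
      apply/negP => /eqP ceq.
      have := Hc e eE (c u); apply/negP; rewrite -ltnNge.
      apply: (@leq_trans #|[set u; v]|); first by rewrite cards2 uv.
      apply: subset_leq_card; apply/subsetP => w; rewrite !inE.
      case/orP => /eqP ->; rewrite ?ue ?ve ?eqxx //=.
      by apply/eqP; apply: val_inj.
    case/orP: (lt_tot u v uv) => H; have := key _ _ H.
      by rewrite (negbTE cneq).
    by rewrite eq_sym (negbTE cneq) distn_sym.
  - move=> u v uv _.
    case/orP: (lt_tot u v uv) => H; have := key _ _ H; case: eqP => _ //.
    + by apply: leq_trans; apply: ltnW.
    + by rewrite distn_sym.
    + by rewrite distn_sym => /(leq_trans (ltnW hk)).
have Hspan : span f <= k * (n - k') + (k' - 1) * h.
  apply: leq_trans (leq_subr _ _) _.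
  apply/bigmax_leqP => v _; rewrite /f.
  have := pos_n v; have := cn_k v.
  move: (pos v) (cn v) => a b bk an; nia.
rewrite /lambda_hk; case: ex_minnP => m _ Hm; apply: leq_trans Hspan.
by apply: Hm; apply/asboolP; exists f.
Qed.
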